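(* Let $G\subseteq \mathrm{GL}_n(\mathbb{R})$ be a finite group with fundamental invariants $\pi_1,\dots,\pi_m$, so that $\mathbb{R}[X_1,\dots,X_n]^G=\mathbb{R}[\pi_1,\dots,\pi_m]$, and let $\Pi=(\pi_1,\dots,\pi_m):\mathbb{C}^n\to\mathbb{C}^m$ be the Hilbert map. Let $z\in V_{\mathbb{R}}(I_\Pi)$ be a point whose preimage $\Pi^{-1}(z)\subseteq\mathbb{C}^n$ is not contained in $\mathbb{R}^n$. Then there exists $f\in\left(\Sigma\mathbb{R}[\underline{X}]^2\right)^G$ such that $\phi_z(f)<0$.
   Context: $I_\Pi\subseteq\mathbb{R}[z_1,\dots,z_m]$ is the ideal of polynomial relations among $\pi_1,\dots,\pi_m$, and $V_{\mathbb{R}}(I_\Pi)\subseteq\mathbb{R}^m$ its real zero set. For $z\in V_{\mathbb{R}}(I_\Pi)$, $\phi_z:\mathbb{R}[\underline{X}]^G\to\mathbb{R}$ is the ring homomorphism $g(\pi_1,\dots,\pi_m)\mapsto g(z)$ (well defined since $z$ satisfies all relations). $\Sigma\mathbb{R}[\underline{X}]^2$ is the set of finite sums of squares of polynomials in $\mathbb{R}[\underline{X}]=\mathbb{R}[X_1,\dots,X_n]$, and $\left(\Sigma\mathbb{R}[\underline{X}]^2\right)^G=\Sigma\mathbb{R}[\underline{X}]^2\cap\mathbb{R}[\underline{X}]^G$. *)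

(* Defs.v *)
From HB Require Import structures.
From mathcomp Require Import all_boot all_order all_algebra.
From mathcomp Require Import Rstruct.
From Stdlib Require Import Rdefinitions.
From mathcomp Require Import mpoly.
From mathcomp.real_closed Require Import complex.

Set Implicit Arguments.
Unset Strict Implicit.
Unset Printing Implicit Defensive.

Import GRing.Theory Num.Theory.
Local Open Scope ring_scope.
Local Open Scope complex_scope.

Definition finite_matrix_group (n : nat) (G : seq 'M[R]_n) : Prop :=
  [/\ forall g, g \in G -> g \in unitmx,
      1%:M \in G,
      forall g h, g \in G -> h \in G -> g *m h \in G
    & forall g, g \in G -> invmx g \in G].

Definition mat_act (n : nat) (g : 'M[R]_n) (f : {mpoly R[n]}) : {mpoly R[n]} :=
  f \mPo [tuple \sum_(j < n) g i j *: 'X_j | i < n].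

Definition G_invariant (n : nat) (G : seq 'M[R]_n) (f : {mpoly R[n]}) : Prop :=
  forall g, g \in G -> mat_act g f = f.

Definition fundamental_invariants (n m : nat) (G : seq 'M[R]_n)
    (pi : m.-tuple {mpoly R[n]}) : Prop :=
  (forall i : 'I_m, G_invariant G (tnth pi i)) /\
  (forall f, G_invariant G f -> exists g : {mpoly R[m]}, f = g \mPo pi).

Definition relation_ideal (n m : nat) (pi : m.-tuple {mpoly R[n]})
    (g : {mpoly R[m]}) : Prop :=
  g \mPo pi = 0.

Definition in_real_variety (n m : nat) (pi : m.-tuple {mpoly R[n]})
    (z : 'I_m -> R) : Prop :=
  forall g : {mpoly R[m]}, relation_ideal pi g -> g.@[z] = 0.

Definition hilbert_map (n m : nat) (pi : m.-tuple {mpoly R[n]})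
    (w : 'I_n -> R[i]) : 'I_m -> R[i] :=
  fun i => (map_mpoly (real_complex R) (tnth pi i)).@[w].

Definition preimage_real (n m : nat) (pi : m.-tuple {mpoly R[n]})
    (z : 'I_m -> R) : Prop :=
  forall w : 'I_n -> R[i],
    (forall i, hilbert_map pi w i = ((z i)%:C)%C) ->
    exists x : 'I_n -> R, forall j, w j = (x j)%:C.

Definition sos (n : nat) (f : {mpoly R[n]}) : Prop :=
  exists s : seq {mpoly R[n]}, f = \sum_(q <- s) q ^+ 2.

(* phi_z(f) = v : for f = g(pi_1, ..., pi_m), phi_z(f) = g(z).
   (Well defined for z in V_R(I_Pi); stated relationally.) *)
Definition phi_value (n m : nat) (pi : m.-tuple {mpoly R[n]})
    (z : 'I_m -> R) (f : {mpoly R[n]}) (v : R) : Prop :=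
  exists g : {mpoly R[m]}, f = g \mPo pi /\ g.@[z] = v.

(* Main.v *)
Require Import Defs.
From HB Require Import structures.
From mathcomp Require Import all_boot all_order all_algebra.
From mathcomp Require Import Rstruct.
From Stdlib Require Import Rdefinitions.
From mathcomp Require Import mpoly.
From mathcomp.real_closed Require Import complex.
From Stdlib Require Import Classical.
Import GRing.Theory Num.Theory.
Local Open Scope ring_scope.
Set Implicit Arguments.
Unset Strict Implicit.
Unset Printing Implicit Defensive.

Lemma comp_mpolyA n k l (p : {mpoly R[n]}) (L1 : n.-tuple {mpoly R[k]})
  (L2 : k.-tuple {mpoly R[l]}) :
  (p \mPo L1) \mPo L2 = p \mPo [tuple (tnth L1 i \mPo L2) | i < n].
Proof.
rewrite [p \mPo L1]comp_mpolyEX [RHS]comp_mpolyEX raddf_sum /=.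
apply: eq_bigr => mm _; rewrite comp_mpolyZ !comp_mpolyX rmorph_prod /=.
congr (_ *: _); apply: eq_bigr => i _; by rewrite rmorphXn tnth_mktuple.
Qed.

Definition lin_tuple n (g : 'M[R]_n) : n.-tuple {mpoly R[n]} :=
  [tuple \sum_(j < n) g i j *: 'X_j | i < n].

Lemma mat_act_comp n (g h : 'M[R]_n) p :
  mat_act h (mat_act g p) = mat_act (g *m h) p.
Proof.
rewrite /mat_act comp_mpolyA; congr (_ \mPo _); apply: eq_from_tnth => i.
rewrite !tnth_mktuple raddf_sum /=.
under eq_bigr do rewrite comp_mpolyZ comp_mpolyXU -tnth_nth tnth_mktuple scaler_sumr.
rewrite exchange_big /=; apply: eq_bigr => k _.
by rewrite mxE scaler_suml; apply: eq_bigr => j _; rewrite scalerA.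
Qed.

Local Notation RC := (real_complex R).

Definition Ev n (p : {mpoly R[n]}) (w : 'I_n -> R[i]) : R[i] :=
  (map_mpoly RC p).@[w].

Lemma Ev_comp n k (p : {mpoly R[k]}) (L : k.-tuple {mpoly R[n]}) w :
  Ev (p \mPo L) w = Ev p (fun i => Ev (tnth L i) w).
Proof.
rewrite /Ev map_mpoly_comp; last exact: complexI.
by rewrite comp_mpoly_meval; apply: meval_eq => i; rewrite tnth_map.
Qed.

Lemma Ev_real n (p : {mpoly R[n]}) (x : 'I_n -> R) :
  Ev p (fun i => RC (x i)) = RC (p.@[x]).
Proof.
rewrite /Ev !mevalE (perm_big _ (msupp_map_mpoly _ (@complexI _))) rmorph_sum.
apply: eq_bigr => mm _; rewrite mcoeff_map_mpoly rmorphM rmorph_prod.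
by congr (_ * _); apply: eq_bigr => i _; rewrite rmorphXn.
Qed.

Lemma EvM n (p q : {mpoly R[n]}) w : Ev (p * q) w = Ev p w * Ev q w.
Proof. rewrite /Ev. rewrite rmorphM. by rewrite mevalM. Qed.
Lemma EvZ n (c : R) (p : {mpoly R[n]}) w : Ev (c *: p) w = RC c * Ev p w.
Proof. by rewrite /Ev map_mpolyZ mevalZ. Qed.
Lemma EvXU n (j : 'I_n) w : Ev 'X_j w = w j.
Proof. by rewrite /Ev map_mpolyX mevalXU. Qed.
Lemma Ev_sum n I (r : seq I) (F : I -> {mpoly R[n]}) w :
  Ev (\sum_(i <- r) F i) w = \sum_(i <- r) Ev (F i) w.
Proof. by rewrite /Ev (raddf_sum (map_mpoly RC)) raddf_sum. Qed.
Lemma EvXn n (p : {mpoly R[n]}) k w : Ev (p ^+ k) w = Ev p w ^+ k.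
Proof. by rewrite /Ev rmorphXn rmorphXn. Qed.

Lemma Ev_linear n (g : 'M[R]_n) i w :
  Ev (\sum_(j < n) g i j *: 'X_j) w = \sum_(j < n) RC (g i j) * w j.
Proof. by rewrite Ev_sum; apply: eq_bigr => j _; rewrite EvZ EvXU. Qed.

Lemma Ev_mat_act n (g : 'M[R]_n) p w :
  Ev (mat_act g p) w = Ev p (fun i => \sum_(j < n) RC (g i j) * w j).
Proof.
rewrite /mat_act Ev_comp /Ev; apply: meval_eq => i.
by rewrite tnth_mktuple -Ev_linear.
Qed.

Lemma interp (S : seq R[i]) (v : R[i] -> R[i]) :
  exists U : {poly R[i]}, forall t, t \in S -> U.[t] = v t.
Proof.
elim: S => [|s S [U HU]]; first by exists 0.
case: (boolP (s \in S)) => sS.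
  by exists U => t; rewrite inE => /orP [/eqP -> |]; auto.
pose Q := \prod_(s' <- S) ('X - s'%:P).
have Qs : Q.[s] != 0.
  rewrite horner_prod prodf_seq_neq0; apply/allP => s' s'S /=.
  rewrite hornerXsubC subr_eq0; apply: contraNneq sS => ->; exact: s'S.
exists (U + ((v s - U.[s]) / Q.[s]) *: Q) => t.
rewrite inE hornerD hornerZ => /orP [/eqP -> | tS].
  by rewrite divfK // addrC subrK.
have -> : Q.[t] = 0.
  apply/eqP; rewrite horner_prod prodf_seq_eq0; apply/hasP; exists t => //=.
  by rewrite hornerXsubC subrr.
by rewrite mulr0 addr0 HU.
Qed.

Definition realize n (U : {poly R[i]}) (j : 'I_n) : {mpoly R[n]} :=
  \sum_(k < size U) complex.Re (U`_k) *: 'X_j ^+ k.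

Lemma Ev_realize n (U : {poly R[i]}) (j : 'I_n) x :
  Ev (realize U j) x = (U.[x j] + (U.[(x j)^*%C])^*%C) / 2%:R.
Proof.
rewrite /realize Ev_sum.
under eq_bigr do rewrite EvZ EvXn EvXU ReJ_add.
rewrite !horner_coef rmorph_sum /= -big_split /= mulr_suml.
apply: eq_bigr => k _; rewrite rmorphM rmorphXn /= conjcK.
by rewrite mulrAC mulrDl.
Qed.

Definition sgi (t : R[i]) : R[i] :=
  if 0 < complex.Im t then 'i%C else if complex.Im t < 0 then - 'i%C else 0.

Lemma conj_i : ('i%C : R[i])^*%C = - 'i%C.
Proof. by apply/eqP; rewrite eq_complex /= oppr0 !eqxx. Qed.

Lemma sgi_conj t : sgi (t^*%C) = (sgi t)^*%C.
Proof.
case: t => a b; rewrite /sgi /= oppr_gt0 oppr_lt0.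
case: (ltrgtP b 0) => _ /=; rewrite ?conj_i ?rmorphN ?conj_i ?opprK //. all: try (by apply/eqP; rewrite eq_complex /= oppr0 !eqxx).
Qed.

Lemma sgi_sq t : sgi t ^+ 2 = - ((complex.Im t != 0)%:R).
Proof.
rewrite /sgi; case: (ltrgtP (complex.Im t) 0) => H /=.
- by rewrite sqrrN sqr_i.
- by rewrite sqr_i.
- by rewrite expr0n /= oppr0.
Qed.

Lemma halfdbl_c (s : R[i]) : (s + (s^*%C)^*%C) / 2%:R = s.
Proof.
by rewrite conjcK -mulr2n -[s *+ 2]mulr_natr mulfK // pnatr_eq0.

Qed.

Lemma mat_act_sumsq n (h : 'M[R]_n) I J (r1 : seq I) (r2 : seq J) F :
  mat_act h (\sum_(g <- r1) \sum_(j <- r2) (F g j) ^+ 2) =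
  \sum_(g <- r1) \sum_(j <- r2) (mat_act h (F g j)) ^+ 2.
Proof.
rewrite /mat_act rmorph_sum; apply: eq_bigr => g _; rewrite rmorph_sum.
by apply: eq_bigr => j _; rewrite rmorphXn.
Qed.

Lemma xg1 n (w : 'I_n -> R[i]) j :
  \sum_(k < n) RC ((1%:M : 'M[R]_n) j k) * w k = w j.
Proof.
rewrite (bigD1 j) //= mxE eqxx rmorph1 mul1r big1 ?addr0 // => k /negbTE.
by rewrite mxE eq_sym => ->; rewrite rmorph0 mul0r.
Qed.

Unset Implicit Arguments.
Set Strict Implicit.

Theorem proposition2p4 (n m : nat) (G : seq 'M[R]_n)
    (pi : m.-tuple {mpoly R[n]}) (z : 'I_m -> R) :
  finite_matrix_group G ->
  fundamental_invariants G pi ->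
  in_real_variety pi z ->
  ~ preimage_real pi z ->
  exists f : {mpoly R[n]},
    sos f /\ G_invariant G f /\ exists v : R, phi_value pi z f v /\ v < 0.
Proof.
move=> [Gunit G1 GM GV] [_ Hfund] _ Hnp.
have [w [Hw Hnr]] : exists w, (forall i, hilbert_map pi w i = RC (z i)) /\
    ~ exists x : 'I_n -> R, forall j, w j = RC (x j).
  apply: NNPP => H; apply: Hnp => w Hw; apply: NNPP => Hx; apply: H.
  by exists w.
have [j0 Hj0] : exists j0, complex.Im (w j0) != 0.
  apply: NNPP => H; apply: Hnr; exists (fun j => complex.Re (w j)) => j.
  case E: (w j) => [a b] /=.
  case: (eqVneq b 0) => [-> //|hb]; exfalso; apply: H; exists j; by rewrite E.
pose G' := undup G.
pose xg (g : 'M[R]_n) : 'I_n -> R[i] := fun i => \sum_(j < n) RC (g i j) * w j.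
pose T := [seq xg g j | g <- G', j <- index_enum 'I_n].
pose S := T ++ map (@conjc _) T.
have [U HU] := interp S sgi.
pose P := fun j : 'I_n => @realize n U j.
have HP : forall g j, g \in G' -> Ev (mat_act g (P j)) w = sgi (xg g j).
  move=> g j gG; rewrite Ev_mat_act Ev_realize.
  have xT : xg g j \in T by apply/allpairsP; exists (g, j); rewrite /= mem_index_enum.
  rewrite HU; last by rewrite mem_cat xT.
  rewrite HU; last by rewrite mem_cat map_f ?orbT.
  by rewrite sgi_conj halfdbl_c.
pose L := [seq mat_act g (P j) | g <- G', j <- index_enum 'I_n].
pose f := \sum_(q <- L) q ^+ 2.
have fE : f = \sum_(g <- G') \sum_(j <- index_enum 'I_n) (mat_act g (P j)) ^+ 2.
  by rewrite /f big_allpairs_dep.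
have Hinv : G_invariant G f.
  move=> h hG; rewrite fE mat_act_sumsq.
  have hU := Gunit h hG.
  under eq_bigr do under eq_bigr do rewrite mat_act_comp.
  rewrite -(big_map (mulmx^~ h) xpredT (fun g => \sum_(j <- index_enum 'I_n) (mat_act g (P j)) ^+ 2)).
  apply: perm_big; apply: uniq_perm.
  - by rewrite (map_inj_uniq (can_inj (mulmxK hU))) undup_uniq.
  - exact: undup_uniq.
  move=> g; apply/mapP/idP => [[g' g'G ->]|gG].
    rewrite /G' mem_undup in g'G; rewrite mem_undup; exact: (GM _ _ g'G hG).
  exists (g *m invmx h); last by rewrite mulmxKV.
  rewrite /G' mem_undup in gG; rewrite mem_undup; exact: (GM _ _ gG (GV _ hG)).
exists f; split; first by exists L.
split => //.
have [q Hq] := Hfund f Hinv.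
exists q.@[z]; split; first by exists q.
pose N : R := \sum_(g <- G') \sum_(j <- index_enum 'I_n) ((complex.Im (xg g j) != 0)%:R : R).
have E1 : Ev f w = RC (q.@[z]).
  rewrite Hq Ev_comp -Ev_real /Ev; apply: meval_eq => i; exact: Hw i.
have E2 : Ev f w = RC (- N).
  rewrite fE Ev_sum rmorphN rmorph_sum -sumrN; apply: eq_big_seq => g gG.
  rewrite Ev_sum rmorph_sum -sumrN; apply: eq_bigr => j _.
  by rewrite EvXn HP // sgi_sq rmorph_nat.
have -> : q.@[z] = - N by apply: (@complexI _); rewrite -E1 E2.
rewrite oppr_lt0 lt0r; apply/andP; split; last first.
  by apply: sumr_ge0 => g _; apply: sumr_ge0 => j _; apply: ler0n.
apply/negP; rewrite psumr_eq0; last by move=> g _; apply: sumr_ge0 => j _; apply: ler0n.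
move=> /allP /(_ 1%:M); rewrite /G' mem_undup => /(_ G1) /=.
rewrite psumr_eq0; last by move=> j _; apply: ler0n.
move=> /allP /(_ j0 (mem_index_enum _)) /=.
by rewrite /xg xg1 Hj0 oner_eq0.
Qed.
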